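(* Let $c$ be a non-negative integer, $r$ a positive integer, $G$ a multigraph, and $\mathcal{C}$ a cluster partition of $G$ of capacity at most $r$ such that $\delta(G/\mathcal{C})\ge 8c$. Define $w:V(G)\to\mathbb{R}_{\ge 0}$ by $w(v)=|\mathrm{ext}(C)|/|C|$ for $v\in C\in\mathcal{C}$. Then for every $c$-bond cover $X$ of $G$, \[\frac{1}{2r}\,|E(G/\mathcal{C})|\;\le\;\sum_{v\in X}w(v)\;\le\;2\,|E(G/\mathcal{C})|.\]
   Context: Graphs are finite multigraphs without loops; when contracting edges, multiplicities of parallel edges created are summed and loops are deleted; edge counts are with multiplicity. The edge-degree of a vertex is the number of incident edges; $\delta(H)$ is the minimum edge-degree of $H$. A cluster partition of $G$ is a collection $\mathcal{C}$ of pairwise disjoint nonempty vertex sets, each inducing a connected subgraph of $G$, whose union is $V(G)$; its capacity is the maximum size of a set in $\mathcal{C}$. $G/\mathcal{C}$ is the multigraph obtained from $G$ by contracting all edges inside each cluster. For $C\in\mathcal{C}$, $\mathrm{ext}(C)$ is the set of edges with exactly one endpoint in $C$. $\theta_c$ is the graph on two vertices joined by $c$ parallel edges; $X\subseteq V(G)$ is a $c$-bond cover of $G$ if $G-X$ has no $\theta_c$ minor. *)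

(* Defs.v *)
From mathcomp Require Import all_boot all_order all_algebra.
Set Implicit Arguments. Unset Strict Implicit. Unset Printing Implicit Defensive.
Import Order.TTheory GRing.Theory Num.Theory.

(* A finite loopless multigraph on vertex type V is given by an edge
   multiplicity function m : V -> V -> nat (m u v = number of parallel
   edges between u and v), symmetric and zero on the diagonal. *)
Definition multigraph (V : finType) (m : V -> V -> nat) : Prop :=
  (forall u v, m u v = m v u) /\ (forall v, m v v = 0%N).

Definition adj_in (V : finType) (m : V -> V -> nat) (A : {set V}) : rel V :=
  fun u v => [&& u \in A, v \in A & (0 < m u v)%N].

Definition connected_in (V : finType) (m : V -> V -> nat) (A : {set V}) : Prop :=
  forall x y, x \in A -> y \in A -> connect (adj_in m A) x y.

Definition e_between (V : finType) (m : V -> V -> nat) (A B : {set V}) : nat :=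
  \sum_(u in A) \sum_(v in B) m u v.

Definition cluster_partition (V : finType) (m : V -> V -> nat)
    (C : {set {set V}}) : Prop :=
  partition C [set: V] /\ (forall K, K \in C -> connected_in m K).

Definition capacity_le (V : finType) (C : {set {set V}}) (r : nat) : Prop :=
  forall K, K \in C -> (#|K| <= r)%N.

Definition ext (V : finType) (m : V -> V -> nat) (K : {set V}) : nat :=
  e_between m K (~: K).

(* edge multiplicity in G/C between clusters K1 and K2 (loops deleted) *)
Definition quot_mult (V : finType) (m : V -> V -> nat) (K1 K2 : {set V}) : nat :=
  if K1 == K2 then 0%N else e_between m K1 K2.

Definition quot_deg (V : finType) (m : V -> V -> nat) (C : {set {set V}})
    (K : {set V}) : nat :=
  \sum_(K' in C) quot_mult m K K'.

Definition quot_min_deg_ge (V : finType) (m : V -> V -> nat)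
    (C : {set {set V}}) (d : nat) : Prop :=
  forall K, K \in C -> (d <= quot_deg m C K)%N.

(* |E(G/C)| : each edge is counted twice in the ordered sum *)
Definition quot_edges (V : finType) (m : V -> V -> nat) (C : {set {set V}}) : nat :=
  (\sum_(K1 in C) \sum_(K2 in C) quot_mult m K1 K2)./2.

(* H = G - X (restricted to vertex set ~: X) has a theta_c minor:
   there are two disjoint nonempty branch sets in V \ X, each inducing
   a connected subgraph, joined by at least c edges. *)
Definition has_theta_minor_avoiding (V : finType) (m : V -> V -> nat)
    (X : {set V}) (c : nat) : Prop :=
  exists A B : {set V},
    [/\ A != set0, B != set0, [disjoint A & B],
        [disjoint A & X] && [disjoint B & X]
      & [/\ connected_in m A, connected_in m B & (c <= e_between m A B)%N]].

Definition bond_cover (V : finType) (m : V -> V -> nat) (c : nat)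
    (X : {set V}) : Prop :=
  ~ has_theta_minor_avoiding m X c.

Definition weight (V : finType) (m : V -> V -> nat) (C : {set {set V}})
    (v : V) : rat :=
  ((ext m (pblock C v))%:R / (#|pblock C v|)%:R)%R.

(* Main.v *)
Require Import Defs.
From mathcomp Require Import all_boot all_order all_algebra.
From mathcomp Require Import zify ring.
Import Order.TTheory GRing.Theory Num.Theory.
Set Implicit Arguments. Unset Strict Implicit. Unset Printing Implicit Defensive.

Section Merge.
Variables (V : finType) (m : V -> V -> nat).
Hypothesis msym : forall u v, m u v = m v u.

Definition gS (L : finType) (lab : V -> L) (D : {set V}) :=
  \sum_(u in D) \sum_(v in D) (if lab u == lab v then 0 else m u v).

Definition blockL (L : finType) (lab : V -> L) (D : {set V}) l :=
  [set v in D | lab v == l].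

Lemma connected_U A B a b : connected_in m A -> connected_in m B ->
  a \in A -> b \in B -> 0 < m a b -> connected_in m (A :|: B).
Proof.
move=> cA cB aA bB mab.
have subA : forall x y, x \in A -> y \in A -> connect (adj_in m (A :|: B)) x y.
  move=> x y xA yA; move: (cA x y xA yA); apply: connect_sub => u v.
  rewrite /adj_in => /and3P[uA vA muv]; apply: connect1.
  by rewrite /adj_in !inE uA vA muv ?orbT.
have subB : forall x y, x \in B -> y \in B -> connect (adj_in m (A :|: B)) x y.
  move=> x y xA yA; move: (cB x y xA yA); apply: connect_sub => u v.
  rewrite /adj_in => /and3P[uA vA muv]; apply: connect1.
  by rewrite /adj_in !inE uA vA muv ?orbT.
have eab : adj_in m (A :|: B) a b by rewrite /adj_in !inE aA bB mab ?orbT.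
have eba : adj_in m (A :|: B) b a by rewrite /adj_in !inE aA bB msym mab ?orbT.
move=> x y; rewrite !inE => /orP[xA|xB] /orP[yA|yB].
- exact: subA.
- apply: connect_trans (subA _ _ xA aA) _; apply: connect_trans (connect1 eab) _; exact: subB.
- apply: connect_trans (subB _ _ xB bB) _; apply: connect_trans (connect1 eba) _; exact: subA.
- exact: subB.
Qed.

Lemma eb_sym A B : e_between m A B = e_between m B A.
Proof. rewrite /e_between exchange_big; apply: eq_bigr => u _; apply: eq_bigr => v _; exact: msym. Qed.

Lemma pt_lemma (L : eqType) (l1 l2 a b : L) k : l1 != l2 ->
  (if a == b then 0 else k) =
  (if (if a == l2 then l1 else a) == (if b == l2 then l1 else b) then 0 else k)
  + (if (a == l1) && (b == l2) then k else 0)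
  + (if (a == l2) && (b == l1) then k else 0).
Proof.
move=> ne; have ne' : (l2 == l1) = false by rewrite eq_sym (negbTE ne).
case: (eqVneq a l2) => [->|ha]; case: (eqVneq b l2) => [->|hb];
 case: (eqVneq a l1) => [ea|ea]; case: (eqVneq b l1) => [eb|eb];
 rewrite ?eqxx ?ne' ?(negbTE ne) /= ?addn0 ?add0n //;
 try rewrite (negbTE ha); try rewrite (negbTE hb) /=; done.
Qed.

Lemma sum_block (L : finType) (lab : V -> L) (D : {set V}) l l' :
  \sum_(x in D) \sum_(y in D) (if (lab x == l) && (lab y == l') then m x y else 0)
  = e_between m (blockL lab D l) (blockL lab D l').
Proof.
rewrite /e_between [RHS](eq_bigl (fun x => (x \in D) && (lab x == l))); last by move=> x; rewrite inE.
rewrite big_mkcondr; apply: eq_bigr => x xD; case: (lab x == l) => /=; last by rewrite big1.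
rewrite [RHS](eq_bigl (fun y => (y \in D) && (lab y == l'))); last by move=> y; rewrite inE.
by rewrite big_mkcondr.
Qed.

Variables (X : {set V}) (c : nat).
Hypothesis hbc : bond_cover m c X.

Lemma merge_bound (L : finType) n (lab : V -> L) (D : {set V}) :
  #|lab @: D| <= n -> [disjoint D & X] ->
  (forall l, l \in lab @: D -> connected_in m (blockL lab D l)) ->
  gS lab D <= 2 * c * #|lab @: D|.
Proof.
have nopair : forall (lab : V -> L),
   ~~ [exists u, exists v, [&& u \in D, v \in D, lab u != lab v & 0 < m u v]] ->
   gS lab D = 0.
  move=> lab' /existsPn H; apply: big1 => u uD; apply: big1 => v vD.
  case: eqP => // /eqP ne; move/existsPn: (H u) => /(_ v).
  by rewrite uD vD ne /=; case: (m u v).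
elim: n lab => [|n IH] lab Hn HD Hconn;
  (case: (boolP [exists u, exists v, [&& u \in D, v \in D, lab u != lab v & 0 < m u v]]);
   last by move=> /nopair ->).
- case/existsP=> u /existsP[v /and4P[uD _ _ _]].
  have : lab u \in lab @: D by apply: imset_f.
  by move: Hn; rewrite leqn0 cards_eq0 => /eqP ->; rewrite inE.
case/existsP=> u /existsP[v /and4P[uD vD ne muv]].
set l1 := lab u; set l2 := lab v.
set B1 := blockL lab D l1; set B2 := blockL lab D l2.
have l1I : l1 \in lab @: D by apply: imset_f.
have l2I : l2 \in lab @: D by apply: imset_f.
have uB1 : u \in B1 by rewrite inE uD eqxx.
have vB2 : v \in B2 by rewrite inE vD eqxx.
have B1D : B1 \subset D by apply/subsetP => w; rewrite inE => /andP[].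
have B2D : B2 \subset D by apply/subsetP => w; rewrite inE => /andP[].
have ec : e_between m B1 B2 < c.
  rewrite ltnNge; apply/negP => ce; apply: hbc; exists B1, B2; split.
  - by apply/set0Pn; exists u.
  - by apply/set0Pn; exists v.
  - rewrite disjoint_subset; apply/subsetP => w; rewrite !inE => /andP[_ /eqP ->].
    by apply/andP => -[_ /eqP]; apply/eqP.
  - by rewrite (disjointWl B1D HD) (disjointWl B2D HD).
  - by split => //; apply: Hconn.
pose lab' w := if lab w == l2 then l1 else lab w.
have sub' : lab' @: D \subset (lab @: D) :\ l2.
  apply/subsetP => l /imsetP[w wD ->]; rewrite /lab' !inE.
  case: ifP => [_|h]; first by rewrite ne l1I.
  by rewrite h imset_f.
have card' : #|lab' @: D| < #|lab @: D|.
  rewrite (cardsD1 l2 (lab @: D)) l2I add1n ltnS; exact: subset_leq_card.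
have IH' := IH lab'.
have conn' : forall l, l \in lab' @: D -> connected_in m (blockL lab' D l).
  move=> l lI; have := subsetP sub' _ lI; rewrite !inE => /andP[nl2 lI0].
  case: (eqVneq l l1) => [->|nl1].
    have -> : blockL lab' D l1 = B1 :|: B2.
      apply/setP => w; rewrite !inE /lab'.
      case: (lab w =P l2) => [->|h]; rewrite ?eqxx;
        by case: (w \in D); rewrite /= ?orbT ?orbF.
    apply: (connected_U (a:=u) (b:=v)) => //; apply: Hconn => //.
  have -> : blockL lab' D l = blockL lab D l.
    apply/setP => w; rewrite !inE /lab'.
    case: (lab w =P l2) => [->|h] //; by rewrite eq_sym (negbTE nl1) eq_sym (negbTE nl2) andbF.
  exact: Hconn.
have cn : #|lab' @: D| <= n by rewrite -ltnS (leq_trans card' Hn).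
have Hb := IH' cn HD conn'.
have -> : gS lab D = gS lab' D + e_between m B1 B2 + e_between m B2 B1.
  rewrite /gS -!sum_block -!big_split; apply: eq_bigr => x _.
  rewrite -!big_split; apply: eq_bigr => y _; exact: pt_lemma.
rewrite (eb_sym B2 B1).
move: Hb ec card'; set N' := #|_|; set N := #|_|; set e := e_between _ _ _.
move=> Hb ec card'; nia.
Qed.
End Merge.
Lemma sum_sym_even (I : finType) (f : I -> I -> nat) :
  (forall i j, f i j = f j i) -> (forall i, f i i = 0) ->
  ~~ odd (\sum_i \sum_j f i j).
Proof.
move=> fs fd.
pose h i j := if (enum_rank i < enum_rank j)%N then f i j else 0.
have fh : forall i j, f i j = h i j + h j i.
  move=> i j; rewrite /h; case: (ltngtP (enum_rank i) (enum_rank j)) => H.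
  - by rewrite addn0.
  - by rewrite add0n fs.
  - by move/val_inj/enum_rank_inj: H => ->; rewrite fd.
rewrite (eq_bigr (fun i => \sum_j h i j + \sum_j h j i)); last first.
  by move=> i _; rewrite -big_split; apply: eq_bigr => j _; apply: fh.
rewrite big_split /=.
have -> : \sum_i \sum_j h j i = \sum_i \sum_j h i j by apply: exchange_big.
by rewrite addnn odd_double.
Qed.

Local Open Scope ring_scope.

Theorem lemma5 (c r : nat) (V : finType) (m : V -> V -> nat)
    (C : {set {set V}}) :
  (0 < r)%N ->
  multigraph m ->
  cluster_partition m C ->
  capacity_le C r ->
  quot_min_deg_ge m C (8 * c) ->
  forall X : {set V}, bond_cover m c X ->
    (1 / (2 * r)%:R) * (quot_edges m C)%:R <= \sum_(v in X) weight m C v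
    /\ \sum_(v in X) weight m C v <= 2%:R * (quot_edges m C)%:R.
Proof.
move=> r0 [msym mdiag] [Hpart Hconn] Hcap Hdeg X Hbc.
case/and3P: Hpart => /eqP Hcov Htriv H0.
set blk := pblock C.
have inblk : forall v, v \in blk v by move=> v; rewrite mem_pblock Hcov inE.
have blkC : forall v, blk v \in C by move=> v; apply: pblock_mem; rewrite Hcov inE.
have memK : forall K v, K \in C -> (v \in K) = (blk v == K).
  move=> K v KC; apply/idP/eqP => [vK|<-]; [exact: def_pblock | exact: inblk].
have bK : forall K v, K \in C -> v \in K -> blk v = K.
  by move=> K v KC vK; apply/eqP; rewrite -memK.
pose g u v := if blk u == blk v then 0%N else m u v.
pose row u := (\sum_v g u v)%N.
have gsym : forall u v, g u v = g v u by move=> u v; rewrite /g eq_sym msym.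
have rowK : forall K, K \in C -> (\sum_(u in K) row u)%N = ext m K.
  move=> K KC; rewrite /ext /e_between; apply: eq_bigr => u uK.
  rewrite big_mkcond /row; apply: eq_bigr => v _.
  by rewrite /g inE memK // (bK K u) // eq_sym; case: (blk v == K).
have degK : forall K, K \in C -> quot_deg m C K = ext m K.
  move=> K KC; rewrite -rowK // /quot_deg /quot_mult.
  transitivity (\sum_(K' in C) \sum_(u in K) \sum_(v in K') g u v)%N.
    apply: eq_bigr => K' K'C; case: eqP => [<-|ne].
      rewrite big1 // => u uK; rewrite big1 // => v vK.
      by rewrite /g (bK K u) // (bK K v) // eqxx.
    apply: eq_bigr => u uK; apply: eq_bigr => v vK.
    by rewrite /g (bK K u) // (bK K' v) //; case: eqP.
  rewrite exchange_big /=; apply: eq_bigr => u _.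
  rewrite -big_trivIset // Hcov /row; apply: eq_bigl => v; by rewrite inE.
have sumrowC : (\sum_(K in C) \sum_(u in K) row u)%N = (\sum_u row u)%N.
  rewrite -big_trivIset // Hcov; apply: eq_bigl => u; by rewrite inE.
have Tdef : (\sum_(K1 in C) \sum_(K2 in C) quot_mult m K1 K2)%N = (\sum_u row u)%N.
  rewrite -sumrowC; apply: eq_bigr => K KC; by rewrite rowK // -degK.
set T := (\sum_u row u)%N.
have [k Tk] : exists k, T = k.*2.
  exists T./2; rewrite -{1}(odd_double_half T).
  by rewrite (negbTE (sum_sym_even gsym _)) // => i; rewrite /g eqxx.
have qe : quot_edges m C = k by rewrite /quot_edges Tdef -/T Tk doubleK.
rewrite qe.
have w0 : forall v, 0 <= weight m C v by move=> v; apply: divr_ge0; apply: ler0n.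
have Kpos : forall K, K \in C -> (0 < #|K|)%N.
  move=> K KC; rewrite card_gt0; apply/negP => /eqP K0; by move: H0; rewrite -K0 KC.
have sumK : forall K, K \in C -> \sum_(v in K) weight m C v = (ext m K)%:R.
  move=> K KC; rewrite (eq_bigr (fun _ => (ext m K)%:R / #|K|%:R)); last first.
    by move=> v vK; rewrite /weight -/blk (bK K v).
  rewrite sumr_const -[_ *+ #|K|]mulr_natr divfK // pnatr_eq0 -lt0n; exact: Kpos.
have extT : (\sum_(K in C) ext m K)%N = T.
  by rewrite /T -sumrowC; apply: eq_bigr => K KC; rewrite rowK.
have allw : \sum_v weight m C v = T%:R.
  transitivity (\sum_(v in cover C) weight m C v).
    by apply: eq_bigl => v; rewrite Hcov inE.
  rewrite big_trivIset // (eq_bigr _ sumK) -natr_sum extT //.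
split; last first.
  apply: (le_trans (y := \sum_v weight m C v)).
    rewrite [X in _ <= X](bigID (fun v => v \in X)) /= lerDl.
    by apply: sumr_ge0 => v _.
  by rewrite allw Tk -muln2 natrM mulrC.
pose D := [set v | [disjoint blk v & X]].
have HD : [disjoint D & X].
  rewrite disjoint_subset; apply/subsetP => v; rewrite !inE => vD.
  by rewrite (disjointFr vD (inblk v)).
have Hc : forall l, l \in blk @: D -> connected_in m (blockL blk D l).
  move=> l /imsetP[w wD ->].
  have -> : blockL blk D (blk w) = blk w.
    apply/setP => x; rewrite /blockL !inE (memK _ _ (blkC w)).
    case E: (blk x == blk w); rewrite ?andbF ?andbT //.
    by move/eqP: E => ->; move: wD; rewrite inE.
  exact: Hconn (blkC w).
have Ha := merge_bound msym Hbc (leqnn _) HD Hc.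
set N := #|blk @: D| in Ha.
have rowD : (8 * c * N <= \sum_(u in D) row u)%N.
  rewrite (partition_big_imset blk) /= mulnC -sum_nat_const.
  apply: leq_sum => K /imsetP[w wD ->].
  rewrite (eq_bigl (fun u => u \in blk w)); last first.
    move=> u; rewrite (memK _ _ (blkC w)).
    case E: (blk u == blk w); rewrite ?andbF ?andbT //.
    by rewrite inE (eqP E); move: wD; rewrite inE.
  by rewrite rowK // -degK //; apply: Hdeg.
have rowsplit : forall u, row u = (\sum_(v in D) g u v + \sum_(v | v \notin D) g u v)%N.
  by move=> u; rewrite /row (bigID (fun v => v \in D)).
set b := (\sum_(u in D) \sum_(v | v \notin D) g u v)%N.
have ab : (\sum_(u in D) row u)%N = (gS m blk D + b)%N.
  by rewrite /gS /b -big_split; apply: eq_bigr => u _; apply: rowsplit.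
set Q := (\sum_(u | u \notin D) row u)%N.
have TQ : T = (\sum_(u in D) row u + Q)%N by rewrite /T (bigID (fun u => u \in D)).
have bQ : (b <= Q)%N.
  rewrite /b exchange_big /=; apply: leq_sum => v _.
  rewrite rowsplit (eq_bigr (fun u => g v u)) ?leq_addr // => u _; exact: gsym.
have kQ : (k <= 2 * Q)%N.
  move: Ha rowD ab TQ bQ Tk; set a := gS m blk D; set z := (c * N)%N.
  have -> : (2 * c * N = 2 * z)%N by rewrite /z mulnA.
  have -> : (8 * c * N = 8 * z)%N by rewrite /z mulnA.
  move=> *; lia.
have HS : Q%:R / r%:R <= \sum_(v in X) weight m C v.
  have cov : forall (F : V -> rat), \sum_v F v = \sum_(K in C) \sum_(v in K) F v.
    move=> F; rewrite -big_trivIset // Hcov; apply: eq_bigl => v; by rewrite inE.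
  rewrite /Q natr_sum mulr_suml [X in X <= _]big_mkcond [X in _ <= X]big_mkcond !cov.
  apply: ler_sum => K KC.
  case dK: [disjoint K & X].
    rewrite big1; first by apply: sumr_ge0 => v _; case: ifP => // _; apply: w0.
    by move=> u uK; rewrite inE (bK K u) // dK.
  have : K :&: X != set0 by rewrite setI_eq0 dK.
  case/set0Pn => x; rewrite inE => /andP[xK xX].
  rewrite (eq_bigr (fun u => (row u)%:R / r%:R)); last first.
    by move=> u uK; rewrite inE (bK K u) // dK.
  rewrite -mulr_suml -natr_sum rowK //.
  rewrite (bigD1 x) //= xX.
  apply: (le_trans (y := weight m C x)); last first.
    by rewrite lerDl; apply: sumr_ge0 => v _; case: ifP => // _; apply: w0.
  rewrite /weight -/blk (bK K x) //.
  apply: ler_wpM2l; first exact: ler0n.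
  rewrite lef_pV2 ?posrE ?ltr0n ?Kpos // ler_nat; exact: Hcap.
apply: le_trans HS.
have r0' : r%:R != 0 :> rat by rewrite pnatr_eq0 -lt0n.
rewrite (_ : Q%:R / r%:R = 1 / (2 * r)%:R * (2 * Q)%:R); last first.
  by rewrite !natrM; field.
apply: ler_wpM2l; first by apply: divr_ge0; rewrite ?ler01 ?ler0n.
by rewrite ler_nat.
Qed.
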